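(* Let $n\in\mathbb{N}$, $\mathcal{R}\subset\mathcal{H}_n$, and let $\mathbb{T}$ be a generator set of $\mathcal{R}$. Then for all $A_1,A_2\subset[n]$, $$\{\mathcal{O}_{A_1},\mathcal{O}_{A_1^c}\}=\{\mathcal{O}_{A_2},\mathcal{O}_{A_2^c}\}\iff A_1\sim_{\mathcal{R}}A_2 .$$
   Context: $[n]=\{1,\dots,n\}$, $A^c=[n]\setminus A$. $\mathcal{H}_n$ is the computational basis $\{|i_1\dots i_n\rangle: i_j\in\{0,1\}\}$. For $|\psi\rangle=|a_1\dots a_n\rangle$ and non-empty $A=\{i_1<\dots<i_m\}\subset[n]$, $|\psi_A\rangle=|a_{i_1}\dots a_{i_m}\rangle$. For non-empty $A$, $\sim_A$ on $\mathcal{R}$ is: $|\psi\rangle\sim_A|\phi\rangle$ iff $|\psi_A\rangle=|\phi_A\rangle$; $\sim_\emptyset$ makes all elements equivalent; $\mathcal{R}/{\sim_A}$ is the set of classes. $A_1\sim_{\mathcal{R}}A_2$ iff $\{\mathcal{R}/{\sim_{A_1}},\mathcal{R}/{\sim_{A_1^c}}\}=\{\mathcal{R}/{\sim_{A_2}},\mathcal{R}/{\sim_{A_2^c}}\}$. For a set $F$ of maps $\mathcal{R}\to\mathcal{R}$, $\mathcal{G}(F)$ denotes the closure of $F$ under composition. A set $\mathbb{T}$ of maps $\mathcal{R}\to\mathcal{R}$ is a generator set of $\mathcal{R}$ if: (i) all $P,T\in\mathcal{G}(\mathbb{T})$ commute, $PT=TP$; (ii) for all $|\psi\rangle,|\phi\rangle\in\mathcal{R}$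 there is $P\in\mathcal{G}(\mathbb{T})$ with $P|\psi\rangle=|\phi\rangle$; (iii) (local invariance) for every $P\in\mathbb{T}$ and non-empty $A\subset[n]$, if $(P|\psi\rangle)_A=|\psi_A\rangle$ for some $|\psi\rangle\in\mathcal{R}$, then $(P|\phi\rangle)_A=|\phi_A\rangle$ for all $|\phi\rangle\in\mathcal{R}$. For non-empty $A\subset[n]$, $\mathcal{O}_A=\{P\in\mathcal{G}(\mathbb{T}) : \forall|\psi\rangle\in\mathcal{R},\ (P|\psi\rangle)_A=|\psi_A\rangle\}$, and $\mathcal{O}_\emptyset=\mathcal{G}(\mathbb{T})$. Operators are compared as maps on $\mathcal{R}$. *)

(* Defs.v *)
From mathcomp Require Import all_boot.
Set Implicit Arguments. Unset Strict Implicit. Unset Printing Implicit Defensive.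

(* Computational basis states of n qubits: bit strings |i_1 ... i_n>,
   encoded as functions 'I_n -> bool (qubit j ~ index j-1). *)
Notation basis n := {ffun 'I_n -> bool}.

Notation state R := {x : basis _ | x \in R}.

(* Maps R -> R, compared as maps on R (finite functions: Leibniz = extensional). *)
Notation op R := {ffun state R -> state R}.

Section Defs.
Variables (n : nat) (R : {set basis n}).

Definition compo (P Q : op R) : op R := [ffun x => P (Q x)].

Inductive gen (F : {set op R}) : op R -> Prop :=
| gen_base P : P \in F -> gen F P
| gen_comp P Q : gen F P -> gen F Q -> gen F (compo P Q).

(* |psi_A> = |phi_A>  (vacuous for A empty, matching ~_emptyset). *)
Definition agree (A : {set 'I_n}) (x y : basis n) : bool :=
  [forall i in A, x i == y i].

Definition classes (A : {set 'I_n}) : {set {set state R}} :=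
  [set [set y : state R | agree A (val x) (val y)] | x : state R].

Definition simR (A1 A2 : {set 'I_n}) : Prop :=
  [set classes A1; classes (~: A1)] = [set classes A2; classes (~: A2)].

Definition generator_set (T : {set op R}) : Prop :=
  [/\ (forall P Q, gen T P -> gen T Q -> compo P Q = compo Q P),
      (forall psi phi : state R, exists2 P, gen T P & P psi = phi) &
      (forall P, P \in T -> forall A : {set 'I_n}, A != set0 ->
         (exists psi : state R, agree A (val (P psi)) (val psi)) ->
         forall phi : state R, agree A (val (P phi)) (val phi))].

Definition O (T : {set op R}) (A : {set 'I_n}) : op R -> Prop :=
  fun P => gen T P /\
    (A != set0 -> forall psi : state R, agree A (val (P psi)) (val psi)).

Definition eqset (X Y : op R -> Prop) : Prop := forall P, X P <-> Y P.

Definition eqpair (X1 Y1 X2 Y2 : op R -> Prop) : Prop :=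
  (eqset X1 X2 /\ eqset Y1 Y2) \/ (eqset X1 Y2 /\ eqset Y1 X2).

End Defs.

(* Main.v *)
Require Import Defs.
From mathcomp Require Import all_boot.

Section S.
Variables (n : nat) (R : {set basis n}).

Lemma agree1 (i : 'I_n) (u v : basis n) : agree [set i] u v = (u i == v i).
Proof.
apply/forall_inP/idP => [H|/eqP H j].
  by apply: H; rewrite in_set1.
by rewrite in_set1 => /eqP ->; rewrite H.
Qed.

Lemma agree_refl (A : {set 'I_n}) (u : basis n) : agree A u u.
Proof. by apply/forall_inP. Qed.

Lemma agree_sym (A : {set 'I_n}) (u v : basis n) : agree A u v = agree A v u.
Proof. by apply/forall_inP/forall_inP => H i /H /eqP ->. Qed.

Lemma agree_trans (A : {set 'I_n}) (u v w : basis n) : agree A u v -> agree A v w -> agree A u w.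
Proof. by move=> /forall_inP H1 /forall_inP H2; apply/forall_inP => i iA;
  rewrite (eqP (H1 i iA)) H2. Qed.

Lemma beq3 (a b c : bool) : (a == c) = ((a == b) == (b == c)).
Proof. by case: a; case: b; case: c. Qed.

Lemma unif (T : {set op R}) :
  (forall P, P \in T -> forall A : {set 'I_n}, A != set0 ->
         (exists psi : state R, agree A (val (P psi)) (val psi)) ->
         forall phi : state R, agree A (val (P phi)) (val phi)) ->
  forall P, gen T P -> forall i (x y : state R),
    (val (P x) i == val x i) = (val (P y) i == val y i).
Proof.
move=> Hinv P; elim => {P} [P PT|P Q _ IHP _ IHQ] i x y.
  have ne : [set i] != set0 by apply/set0Pn; exists i; rewrite in_set1.
  apply/idP/idP => H.
    by rewrite -agree1; apply: (Hinv P PT _ ne); exists x; rewrite agree1.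
  by rewrite -agree1; apply: (Hinv P PT _ ne); exists y; rewrite agree1.
rewrite /compo !ffunE.
rewrite [LHS](beq3 _ (val (Q x) i)) [RHS](beq3 _ (val (Q y) i)).
by rewrite (IHP i (Q x) (Q y)) (IHQ i x y).
Qed.

Lemma classesE (A B : {set 'I_n}) : classes R A = classes R B <->
  (forall x y : state R, agree A (val x) (val y) = agree B (val x) (val y)).
Proof.
split => [E x y|H]; last first.
  rewrite /classes; apply: eq_imset => x; apply/setP => y.
  by rewrite !inE H.
have : [set y : state R | agree A (val x) (val y)] \in classes R B.
  by rewrite -E; apply/imsetP; exists x.
case/imsetP => w _ Ew.
have xw : agree B (val w) (val x).
  have : x \in [set y : state R | agree A (val x) (val y)]
    by rewrite inE agree_refl.
  by rewrite Ew inE.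
have : (y \in [set y : state R | agree A (val x) (val y)]) =
       (y \in [set y0 : state R | agree B (val w) (val y0)]) by rewrite Ew.
rewrite !inE => ->.
apply/idP/idP => H.
  by apply: agree_trans H; rewrite agree_sym.
exact: agree_trans H.
Qed.

Lemma OE (T : {set op R}) (A : {set 'I_n}) (P : op R) : O T A P <-> gen T P /\ forall psi : state R, agree A (val (P psi)) (val psi).
Proof.
split => [[g H]|[g H]]; split => // psi.
case: (boolP (A == set0)) => [/eqP ->|ne]; first by apply/forall_inP => i; rewrite inE.
exact: H.
Qed.

Lemma eqsetE (T : {set op R}) (A B : {set 'I_n}) : generator_set T ->
  eqset (O T A) (O T B) <-> classes R A = classes R B.
Proof.
case=> _ Htr Hinv.
have U := @unif T Hinv.
have key : forall C P, gen T P -> forall x : state R,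
    agree C (val (P x)) (val x) -> O T C P.
  move=> C P g x /forall_inP Hx; apply/OE; split => // z.
  by apply/forall_inP => i iC; rewrite -(U P g i x z) Hx.
split => [E|/classesE H P]; last first.
  split => /OE [g K]; apply/OE; split => // psi.
    by rewrite -H.
  by rewrite H.
apply/classesE => x y.
have [P g Pxy] := Htr x y.
apply/idP/idP => Hxy.
  have /E /OE [_ K] : O T A P by apply: (key _ _ g x); rewrite Pxy agree_sym.
  by move: (K x); rewrite Pxy agree_sym.
have /E /OE [_ K] : O T B P by apply: (key _ _ g x); rewrite Pxy agree_sym.
by move: (K x); rewrite Pxy agree_sym.
Qed.

End S.

Lemma set2_eq (T : finType) (a b c d : T) :
  [set a; b] = [set c; d] <-> (a = c /\ b = d) \/ (a = d /\ b = c).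
Proof.
split => [E|[[-> ->]|[-> ->]]]; last 2 first.
- by [].
- by apply/setP => x; rewrite !inE orbC.
have ha : a \in [set c; d] by rewrite -E !inE eqxx.
have hb : b \in [set c; d] by rewrite -E !inE eqxx orbT.
have hc : c \in [set a; b] by rewrite E !inE eqxx.
have hd : d \in [set a; b] by rewrite E !inE eqxx orbT.
move: ha hb hc hd; rewrite !inE.
case/orP => /eqP ha; case/orP => /eqP hb; case/orP => /eqP hc; case/orP => /eqP hd;
  subst; auto.
Qed.

Theorem theorem2 (n : nat) (R : {set basis n}) (T : {set op R}) :
  generator_set T ->
  forall A1 A2 : {set 'I_n},
    eqpair (O T A1) (O T (~: A1)) (O T A2) (O T (~: A2)) <-> simR R A1 A2.
Proof.
move=> G A1 A2; rewrite /eqpair /simR; split.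
  move=> H; apply/set2_eq.
  case: H => [[/(eqsetE _ _ _ _ _ G) -> /(eqsetE _ _ _ _ _ G) ->]|[/(eqsetE _ _ _ _ _ G) -> /(eqsetE _ _ _ _ _ G) ->]]; auto.
move/set2_eq => [[E1 E2]|[E1 E2]]; [left|right]; split; apply/(eqsetE _ _ _ _ _ G); by [].
Qed.
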